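(* Consider the mining game with $N\ge 2$ miners, costs-per-hash $0<c_1\le c_2\le\dots\le c_N$, reward $R>0$ and capacity parameter $\gamma\ge 0$. There exists a unique equilibrium hash rate profile $h^*$. Moreover, there is an integer $n$ with $2\le n\le N$ such that $$h_i^*=\begin{cases}\dfrac{H^*(R-c_iH^* )}{R+\gamma (H^* )^2}, & 1\le i\le n,\\[2mm] 0, & n<i\le N,\end{cases}$$ and the equilibrium aggregate hash rate $H^*=\sum_{j=1}^N h_j^*$ is $$H^*=\begin{cases}\dfrac{\sqrt{(c^{(n)})^2+4(n-1)R\gamma}-c^{(n)}}{2\gamma}, & \gamma>0,\\[2mm] \dfrac{(n-1)R}{c^{(n)}}, & \gamma=0,\end{cases}$$ where $c^{(n)}=\sum_{i=1}^n c_i$.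
   Context: Mining game: there are $N\ge2$ miners, indexed so that their costs-per-hash satisfy $0<c_1\le\dots\le c_N$ (in the paper these are the costs $c_i=c_i(\beta_i)$ resulting from an arbitrary fixed hardware-investment profile $\beta\in[0,1]^N$). Each miner $i$ chooses a hash rate $h_i\ge 0$, and $H=\sum_{j=1}^N h_j$. The payoff of miner $i$ is $\pi_i(h_i;h_{-i})=\frac{h_i}{H}R-c_ih_i-\frac{\gamma}{2}h_i^2$ if $H>0$ and $\pi_i=0$ if $H=0$. An equilibrium hash rate profile is a vector $h^*\in[0,\infty)^N$ such that $\pi_i(h_i^*;h_{-i}^* )=\sup_{h_i\ge0}\pi_i(h_i;h_{-i}^* )$ for every $i$. *)

(* Defs.v *)
(* concrete real numbers R. Miners are indexed 0..N-1
   (miner i of the paper is index i-1 here). *)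
From Stdlib Require Import Reals Lra Lia.
Open Scope R_scope.

Fixpoint sumN (f : nat -> R) (n : nat) : R :=
  match n with
  | O => 0
  | S m => sumN f m + f m
  end.

Definition payoff (N : nat) (Rw gamma : R) (c : nat -> R) (h : nat -> R)
    (i : nat) (x : R) : R :=
  let H := x + sumN (fun j => if Nat.eq_dec j i then 0 else h j) N in
  if Req_EM_T H 0 then 0
  else x / H * Rw - c i * x - gamma / 2 * x ^ 2.

Definition is_equilibrium (N : nat) (Rw gamma : R) (c : nat -> R)
    (h : nat -> R) : Prop :=
  (forall i, (i < N)%nat -> 0 <= h i) /\
  (forall i, (i < N)%nat -> forall x, 0 <= x ->
      payoff N Rw gamma c h i x <= payoff N Rw gamma c h i (h i)).

(* Main.v *)
Require Import Defs.
From Stdlib Require Import Reals Lra Lia Psatz.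
Open Scope R_scope.

Lemma sumN_ext f g n : (forall i, (i < n)%nat -> f i = g i) -> sumN f n = sumN g n.
Proof. induction n; simpl; intros Hf; [reflexivity|].
 rewrite IHn by (intros; apply Hf; lia). rewrite Hf by lia. reflexivity. Qed.

Lemma sumN_nonneg f n : (forall i, (i < n)%nat -> 0 <= f i) -> 0 <= sumN f n.
Proof. induction n; simpl; intros Hf; [lra|].
 assert (0 <= f n) by (apply Hf; lia).
 assert (0 <= sumN f n) by (apply IHn; intros; apply Hf; lia). lra. Qed.

Lemma sumN_remove f n i : (i < n)%nat ->
  sumN (fun j => if Nat.eq_dec j i then 0 else f j) n = sumN f n - f i.
Proof.
 induction n; intros Hi; [lia|]. simpl.
 destruct (Nat.eq_dec n i).
 - subst. rewrite (sumN_ext _ f). lra. intros j Hj. destruct (Nat.eq_dec j i); [lia|reflexivity].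
 - rewrite IHn by lia. lra.
Qed.

Lemma sumN_scal a f n : sumN (fun j => a * f j) n = a * sumN f n.
Proof. induction n; simpl; [ring|]. rewrite IHn; ring. Qed.

Lemma sumN_le f g n : (forall i, (i<n)%nat -> f i <= g i) -> sumN f n <= sumN g n.
Proof. induction n; simpl; intros Hf; [lra|].
 assert (f n <= g n) by (apply Hf; lia).
 assert (sumN f n <= sumN g n) by (apply IHn; intros; apply Hf; lia). lra. Qed.

Lemma sumN_lt f g n : (forall i, (i<n)%nat -> f i <= g i) ->
  (exists j, (j<n)%nat /\ f j < g j) -> sumN f n < sumN g n.
Proof. induction n; intros Hle [j [Hj Hlt]]; [lia|]. simpl. destruct (Nat.eq_dec j n).
 - subst. assert (sumN f n <= sumN g n) by (apply sumN_le; intros; apply Hle; lia). lra.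
 - assert (sumN f n < sumN g n).
   { apply IHn; [intros; apply Hle; lia| exists j; split; [lia|assumption]]. }
   assert (f n <= g n) by (apply Hle; lia). lra.
Qed.

Lemma sumN_pos_exists f n : 0 < sumN f n -> exists j, (j<n)%nat /\ 0 < f j.
Proof. induction n; simpl; intros H; [lra|]. destruct (Rlt_dec 0 (f n)).
 - exists n; split; [lia|auto].
 - destruct IHn as [j [Hj Hf]]; [lra| ]. exists j; split; [lia|auto]. Qed.

Lemma sumN_zero_tail f n N : (n <= N)%nat ->
  (forall i, (n <= i)%nat -> (i < N)%nat -> f i = 0) -> sumN f N = sumN f n.
Proof. induction N; intros Hn Hz.
 - assert (n = 0%nat) by lia; subst; reflexivity.
 - destruct (Nat.eq_dec n (S N)). { subst; reflexivity. }
   simpl. rewrite Hz by lia. rewrite IHN by (try lia; intros; apply Hz; lia). ring. Qed.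

Lemma sumN_lin a b D c n : sumN (fun i => (a - c i * b) / D) n = (INR n * a - sumN c n * b) / D.
Proof. induction n.
 - simpl. unfold Rdiv; ring.
 - simpl sumN. rewrite IHn, S_INR. unfold Rdiv; ring. Qed.

Lemma sumN_pos c k : (forall i, (i < k)%nat -> 0 < c i) -> (1 <= k)%nat -> 0 < sumN c k.
Proof. induction k; intros Hc Hk; [lia|]. simpl.
 assert (0 < c k) by (apply Hc; lia).
 destruct k. { simpl; lra. }
 assert (0 < sumN c (S k)) by (apply IHk; [intros; apply Hc; lia| lia]). lra. Qed.

Lemma payoff_S N Rw gamma c h i x : (i<N)%nat ->
  payoff N Rw gamma c h i x =
  if Req_EM_T (x + (sumN h N - h i)) 0 then 0
  else x / (x + (sumN h N - h i)) * Rw - c i * x - gamma / 2 * x ^ 2.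
Proof. intros. unfold payoff. rewrite sumN_remove by auto. reflexivity. Qed.

Definition tt (Rw gamma : R) (c : nat -> R) (H : R) (i : nat) : R :=
  Rmax 0 ((Rw - c i * H) / (Rw + gamma * H ^ 2)).

Lemma core_id Rw gamma c S x xs : 0 < S -> 0 <= x -> 0 <= xs ->
 xs/(xs+S)*Rw - c*xs - gamma/2*xs^2 - (x/(x+S)*Rw - c*x - gamma/2*x^2) =
 (x-xs)^2*(Rw*S/((xs+S)^2*(x+S)) + gamma/2)
   + ((xs*(Rw+gamma*(xs+S)^2) - (xs+S)*(Rw - c*(xs+S)))/(xs+S)^2)*(x-xs).
Proof. intros. field. split; lra. Qed.
Lemma K_bounds Rw gamma S x xs : 0 < Rw -> 0 <= gamma -> 0 < S -> 0 <= x -> 0 <= xs ->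
  0 <= Rw*S/((xs+S)^2*(x+S)) + gamma/2 <= Rw/(xs+S)^2 + gamma/2.
Proof. intros. assert (HH: 0 < (xs+S)^2) by nra.
 assert (E: Rw*S/((xs+S)^2*(x+S)) = (Rw/(xs+S)^2) * (S/(x+S))) by (field; split; lra).
 rewrite E.
 assert (0 <= S/(x+S) <= 1).
 { split. apply Rlt_le, Rdiv_lt_0_compat; lra.
   apply (Rmult_le_reg_r (x+S)); [lra|]. unfold Rdiv; rewrite Rmult_assoc, Rinv_l; lra. }
 assert (0 < Rw/(xs+S)^2) by (apply Rdiv_lt_0_compat; lra).
 split; nra. Qed.

Lemma br_suff Rw gamma c S xs: 0<Rw -> 0<=gamma -> 0<S -> 0<=xs ->
 0 <= xs*(Rw+gamma*(xs+S)^2) - (xs+S)*(Rw-c*(xs+S)) ->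
 xs*(xs*(Rw+gamma*(xs+S)^2) - (xs+S)*(Rw-c*(xs+S))) = 0 ->
 forall x, 0<=x -> x/(x+S)*Rw - c*x - gamma/2*x^2 <= xs/(xs+S)*Rw - c*xs - gamma/2*xs^2.
Proof. intros HR Hg HS Hxs HD HxD x Hx.
 pose proof (core_id Rw gamma c S x xs HS Hx Hxs) as E.
 pose proof (K_bounds Rw gamma S x xs HR Hg HS Hx Hxs) as [K0 _].
 set (D := xs*(Rw+gamma*(xs+S)^2) - (xs+S)*(Rw-c*(xs+S))) in *.
 set (K := Rw*S/((xs+S)^2*(x+S)) + gamma/2) in *.
 assert (0 <= (x-xs)^2 * K) by (apply Rmult_le_pos; [apply pow2_ge_0|lra]).
 assert (0 <= D/(xs+S)^2*(x-xs)).
 { replace (D/(xs+S)^2*(x-xs)) with ((D*x - xs*D)/(xs+S)^2) by (field; lra).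
   rewrite HxD, Rminus_0_r.
   unfold Rdiv; apply Rmult_le_pos; [nra|]. left; apply Rinv_0_lt_compat; nra. }
 lra. Qed.

Lemma br_nec Rw gamma c S xs: 0<Rw -> 0<=gamma -> 0<S -> 0<=xs ->
 (forall x, 0<=x -> x/(x+S)*Rw - c*x - gamma/2*x^2 <= xs/(xs+S)*Rw - c*xs - gamma/2*xs^2) ->
 0 <= xs*(Rw+gamma*(xs+S)^2) - (xs+S)*(Rw-c*(xs+S)) /\
 xs*(xs*(Rw+gamma*(xs+S)^2) - (xs+S)*(Rw-c*(xs+S))) = 0.
Proof. intros HR Hg HS Hxs Hbr.
 set (D := xs*(Rw+gamma*(xs+S)^2) - (xs+S)*(Rw-c*(xs+S))).
 set (q := D/(xs+S)^2).
 set (M := Rw/(xs+S)^2 + gamma/2).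
 assert (HH: 0 < (xs+S)^2) by nra.
 assert (HM: 0 < M). { unfold M. assert (0 < Rw/(xs+S)^2) by (apply Rdiv_lt_0_compat; lra). lra. }
 assert (HDq: D = q * (xs+S)^2) by (unfold q; field; lra).
 assert (key: forall x, 0 <= x ->
   xs/(xs+S)*Rw - c*xs - gamma/2*xs^2 - (x/(x+S)*Rw - c*x - gamma/2*x^2)
   <= (x-xs)^2 * M + q*(x-xs)).
 { intros x Hx. rewrite (core_id Rw gamma c S x xs HS Hx Hxs). fold D. fold q.
   pose proof (K_bounds Rw gamma S x xs HR Hg HS Hx Hxs) as [_ K1]. fold M in K1.
   assert (0 <= (x-xs)^2) by apply pow2_ge_0.
   assert (Hk: (x-xs)^2 * (Rw*S/((xs+S)^2*(x+S)) + gamma/2) <= (x-xs)^2 * M)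
     by (apply Rmult_le_compat_l; lra).
   lra. }
 assert (HD: 0 <= D).
 { destruct (Rle_lt_dec 0 D) as [|HD]; [auto|exfalso].
   assert (Hq: q < 0) by nra.
   set (d := - q / (2*M)).
   assert (Hd: 0 < d) by (unfold d; apply Rdiv_lt_0_compat; lra).
   pose proof (key (xs + d) ltac:(lra)) as K.
   pose proof (Hbr (xs + d) ltac:(lra)).
   replace (xs + d - xs) with d in K by ring.
   assert (d^2*M + q*d = - q^2/(4*M)) by (unfold d; field; lra).
   assert (0 < q^2/(4*M)) by (apply Rdiv_lt_0_compat; nra).
   lra. }
 split; [auto|].
 destruct (Req_dec xs 0) as [->|Hx0]; [ring|].
 destruct (Req_dec D 0) as [->|HD0]; [ring|exfalso].
 assert (Hq: 0 < q) by nra.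
 set (m := Rmin xs (q/(2*M))).
 assert (Hm1: m <= xs) by apply Rmin_l.
 assert (Hm2: m <= q/(2*M)) by apply Rmin_r.
 assert (Hm0: 0 < m) by (apply Rmin_glb_lt; [lra| apply Rdiv_lt_0_compat; lra]).
 assert (HmM: m*M <= q/2).
 { replace (q/2) with (q/(2*M)*M) by (field; lra). apply Rmult_le_compat_r; lra. }
 pose proof (key (xs - m) ltac:(lra)) as K.
 pose proof (Hbr (xs - m) ltac:(lra)).
 replace (xs - m - xs) with (-m) in K by ring.
 nra.
Qed.

Lemma S0_contra Rw gamma c xs: 0<Rw -> 0<=gamma -> 0<c -> 0<=xs ->
 (forall x, 0<=x -> (if Req_EM_T (x + 0) 0 then 0 else x / (x + 0) * Rw - c * x - gamma / 2 * x ^ 2)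
    <= (if Req_EM_T (xs + 0) 0 then 0 else xs / (xs + 0) * Rw - c * xs - gamma / 2 * xs ^ 2)) -> False.
Proof. intros HR Hg Hc Hxs Hbr.
 destruct (Req_dec xs 0) as [->|Hx0].
 - set (x0 := Rw/(2*c+gamma+Rw)).
   assert (H0: 0 < x0) by (unfold x0; apply Rdiv_lt_0_compat; lra).
   assert (H1: x0 < 1). { unfold x0. apply (Rmult_lt_reg_r (2*c+gamma+Rw)); [lra|].
     unfold Rdiv; rewrite Rmult_assoc, Rinv_l; lra. }
   assert (H2: x0 * (2*c+gamma+Rw) = Rw) by (unfold x0; field; lra).
   specialize (Hbr x0 ltac:(lra)).
   destruct (Req_EM_T (x0+0) 0); [lra|].
   destruct (Req_EM_T (0+0) 0); [|lra].
   replace (x0/(x0+0)) with 1 in Hbr by (field; lra).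
   assert (gamma * x0^2 <= gamma * x0) by (apply Rmult_le_compat_l; nra).
   nra.
 - specialize (Hbr (xs/2) ltac:(lra)).
   destruct (Req_EM_T (xs/2+0) 0); [lra|].
   destruct (Req_EM_T (xs+0) 0); [lra|].
   replace (xs/2/(xs/2+0)) with 1 in Hbr by (field; lra).
   replace (xs/(xs+0)) with 1 in Hbr by (field; lra).
   assert (0 < c * xs) by nra. nra.
Qed.

Lemma from_D Rw gamma c T xs: 0<Rw -> 0<=gamma -> 0<T -> 0<=xs ->
  0 <= xs*(Rw+gamma*T^2) - T*(Rw-c*T) -> xs*(xs*(Rw+gamma*T^2) - T*(Rw-c*T)) = 0 ->
  xs = T * Rmax 0 ((Rw - c*T)/(Rw+gamma*T^2)).
Proof. intros HR Hg HT Hxs HD HxD.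
 assert (Hden: 0 < Rw + gamma*T^2) by nra.
 unfold Rmax; destruct (Rle_dec 0 ((Rw - c*T)/(Rw+gamma*T^2))) as [Hq|Hq].
 - assert (Hn: 0 <= Rw - c*T).
   { destruct (Rle_lt_dec 0 (Rw - c*T)); auto. exfalso.
     assert ((Rw - c*T)/(Rw+gamma*T^2) < 0).
     { unfold Rdiv. apply Rmult_neg_pos; [lra| apply Rinv_0_lt_compat; lra]. } lra. }
   destruct (Req_dec xs 0) as [->|Hx0].
   + assert (Rw - c*T = 0) by nra. rewrite H. unfold Rdiv; ring.
   + assert (E: xs*(Rw+gamma*T^2) - T*(Rw-c*T) = 0).
     { apply (Rmult_eq_reg_l xs); [rewrite HxD; ring|lra]. }
     apply (Rmult_eq_reg_r (Rw+gamma*T^2)); [|lra].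
     replace (T*((Rw - c*T)/(Rw+gamma*T^2))*(Rw+gamma*T^2)) with (T*(Rw-c*T)) by (field; lra).
     lra.
 - assert (Hn: Rw - c*T < 0).
   { destruct (Rle_lt_dec 0 (Rw - c*T)) as [H|H]; auto. exfalso. apply Hq.
     apply Rmult_le_pos; [lra| left; apply Rinv_0_lt_compat; lra]. }
   destruct (Req_dec xs 0) as [->|Hx0]; [ring|exfalso].
   assert (E: xs*(Rw+gamma*T^2) - T*(Rw-c*T) = 0).
   { apply (Rmult_eq_reg_l xs); [|lra]. rewrite HxD; ring. }
   assert (0 < xs*(Rw+gamma*T^2)) by nra. nra.
Qed.

Lemma to_D Rw gamma c T xs: 0<Rw -> 0<=gamma -> 0<T ->
  xs = T * Rmax 0 ((Rw - c*T)/(Rw+gamma*T^2)) ->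
  0 <= xs*(Rw+gamma*T^2) - T*(Rw-c*T) /\ xs*(xs*(Rw+gamma*T^2) - T*(Rw-c*T)) = 0.
Proof. intros HR Hg HT Hx.
 assert (Hden: 0 < Rw + gamma*T^2) by nra.
 unfold Rmax in Hx; destruct (Rle_dec 0 ((Rw - c*T)/(Rw+gamma*T^2))) as [Hq|Hq].
 - assert (E: xs*(Rw+gamma*T^2) - T*(Rw-c*T) = 0) by (rewrite Hx; field; lra).
   rewrite E. split; [lra|ring].
 - assert (Hn: Rw - c*T < 0).
   { destruct (Rle_lt_dec 0 (Rw - c*T)) as [H|H]; auto. exfalso. apply Hq.
     apply Rmult_le_pos; [lra| left; apply Rinv_0_lt_compat; lra]. }
   rewrite Rmult_0_r in Hx. subst xs. split; nra.
Qed.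

Lemma eq_nec N Rw gamma c h : (forall i, (i<N)%nat -> 0 < c i) -> 0 < Rw -> 0 <= gamma ->
  is_equilibrium N Rw gamma c h ->
  forall i, (i<N)%nat -> 0 < sumN h N - h i /\ h i = sumN h N * tt Rw gamma c (sumN h N) i.
Proof. intros Hc HR Hg [Hnn Hbr] i Hi.
 assert (HS: 0 <= sumN h N - h i).
 { rewrite <- sumN_remove by auto. apply sumN_nonneg. intros j Hj.
   destruct (Nat.eq_dec j i); [lra| apply Hnn; auto]. }
 assert (Hb: forall x, 0 <= x ->
   (if Req_EM_T (x + (sumN h N - h i)) 0 then 0
    else x / (x + (sumN h N - h i)) * Rw - c i * x - gamma / 2 * x ^ 2) <=
   (if Req_EM_T (h i + (sumN h N - h i)) 0 then 0
    else h i / (h i + (sumN h N - h i)) * Rw - c i * h i - gamma / 2 * h i ^ 2)).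
 { intros x Hx. rewrite <- !payoff_S by auto. apply Hbr; auto. }
 pose proof (Hnn i Hi) as Hhi. pose proof (Hc i Hi) as Hci.
 set (T := sumN h N) in *. set (S := T - h i) in *.
 destruct (Req_dec S 0) as [HS0|HS0].
 { exfalso. rewrite HS0 in Hb. exact (S0_contra Rw gamma (c i) (h i) HR Hg Hci Hhi Hb). }
 assert (HSp: 0 < S) by lra.
 split; [auto|].
 assert (Hb2: forall x, 0 <= x -> x/(x+S)*Rw - c i*x - gamma/2*x^2 <= h i/(h i+S)*Rw - c i*h i - gamma/2*h i^2).
 { intros x Hx. specialize (Hb x Hx).
   destruct (Req_EM_T (x+S) 0); [lra|]. destruct (Req_EM_T (h i+S) 0); [lra|]. auto. }
 destruct (br_nec Rw gamma (c i) S (h i) HR Hg HSp Hhi Hb2) as [D1 D2].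
 replace (h i + S) with T in D1, D2 by (unfold S; ring).
 assert (0 < T) by (unfold S in HSp; lra).
 unfold tt. apply from_D; auto.
Qed.

Lemma tt_lt1 Rw gamma c T i : 0 < Rw -> 0 <= gamma -> 0 < T -> 0 < c i -> tt Rw gamma c T i < 1.
Proof. intros. unfold tt. apply Rmax_lub_lt; [lra|].
 assert (0 < Rw + gamma*T^2) by nra.
 apply (Rmult_lt_reg_r (Rw + gamma*T^2)); [lra|].
 unfold Rdiv; rewrite Rmult_assoc, Rinv_l; nra. Qed.

Lemma eq_suff N Rw gamma c h : (forall i, (i<N)%nat -> 0 < c i) -> 0 < Rw -> 0 <= gamma ->
  0 < sumN h N ->
  (forall i, (i<N)%nat -> h i = sumN h N * tt Rw gamma c (sumN h N) i) ->
  is_equilibrium N Rw gamma c h.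
Proof. intros Hc HR Hg HT Hh. split.
 - intros i Hi. rewrite Hh by auto. apply Rmult_le_pos; [lra| apply Rmax_l].
 - intros i Hi x Hx. rewrite !payoff_S by auto.
   pose proof (Hh i Hi) as Hhi. pose proof (tt_lt1 Rw gamma c (sumN h N) i HR Hg HT (Hc i Hi)).
   assert (0 <= tt Rw gamma c (sumN h N) i) by apply Rmax_l.
   set (T := sumN h N) in *. set (S := T - h i).
   assert (HSp: 0 < S). { unfold S. rewrite Hhi. nra. }
   assert (Hhn: 0 <= h i) by (rewrite Hhi; nra).
   destruct (Req_EM_T (x+S) 0); [lra|]. destruct (Req_EM_T (h i+S) 0); [lra|].
   destruct (to_D Rw gamma (c i) T (h i) HR Hg HT Hhi) as [D1 D2].
   replace T with (h i + S) in D1, D2 by (unfold S; ring).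
   apply br_suff; auto.
Qed.

Lemma div_lt p p' d d' : 0 < d -> 0 < d' -> p' * d < p * d' -> p'/d' < p/d.
Proof. intros. assert (p/d - p'/d' = (p*d' - p'*d)/(d*d')) by (field; lra).
 assert (0 < (p*d' - p'*d)/(d*d')) by (apply Rdiv_lt_0_compat; nra). lra. Qed.

Lemma tt_mono Rw gamma c a b i : 0<Rw -> 0<=gamma -> 0<c i -> 0<a -> a<b ->
  tt Rw gamma c b i <= tt Rw gamma c a i /\
  (0 < tt Rw gamma c b i -> tt Rw gamma c b i < tt Rw gamma c a i).
Proof. intros HR Hg Hc Ha Hab. unfold tt.
 assert (Hda: 0 < Rw + gamma*a^2) by nra. assert (Hdb: 0 < Rw + gamma*b^2) by nra.
 destruct (Rle_lt_dec (Rw - c i * b) 0) as [Hn|Hp].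
 - assert (0 <= (c i*b - Rw)/(Rw+gamma*b^2))
     by (apply Rmult_le_pos; [lra| left; apply Rinv_0_lt_compat; lra]).
   assert ((Rw - c i*b)/(Rw+gamma*b^2) = -((c i*b - Rw)/(Rw+gamma*b^2))) by (field; lra).
   rewrite (Rmax_left 0 ((Rw - c i * b) / (Rw + gamma * b ^ 2))) by lra.
   split; [apply Rmax_l| intros; lra].
 - assert (Hqb: 0 < (Rw - c i*b)/(Rw+gamma*b^2)) by (apply Rdiv_lt_0_compat; lra).
   assert (Hlt: (Rw - c i*b)/(Rw+gamma*b^2) < (Rw - c i*a)/(Rw+gamma*a^2)).
   { apply div_lt; auto.
     assert (0 <= gamma*(b^2 - a^2)) by (apply Rmult_le_pos; nra).
     assert (0 < c i * (b - a)) by nra.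
     nra. }
   rewrite !Rmax_right by lra. split; intros; lra.
Qed.

Lemma psi_unique N Rw gamma c a b : (forall i, (i<N)%nat -> 0 < c i) -> 0 < Rw -> 0 <= gamma ->
  0 < a -> 0 < b -> sumN (tt Rw gamma c a) N = 1 -> sumN (tt Rw gamma c b) N = 1 -> a = b.
Proof. intros Hc HR Hg Ha Hb Sa Sb.
 assert (gen: forall x y, 0 < x -> x < y -> sumN (tt Rw gamma c y) N = 1 ->
    sumN (tt Rw gamma c x) N = 1 -> False).
 { intros x y Hx Hxy Sy Sx.
   destruct (sumN_pos_exists (tt Rw gamma c y) N) as [j [Hj Hpj]]; [lra|].
   assert (sumN (tt Rw gamma c y) N < sumN (tt Rw gamma c x) N); [|lra].
   apply sumN_lt.
   - intros i Hi. apply (tt_mono Rw gamma c x y i); auto.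
   - exists j. split; auto. apply (tt_mono Rw gamma c x y j); auto. }
 destruct (Rtotal_order a b) as [H|[H|H]]; auto; exfalso.
 - exact (gen a b Ha H Sb Sa).
 - exact (gen b a Hb H Sa Sb).
Qed.

Definition Gk (Rw gamma : R) (c : nat -> R) (k : nat) (H : R) : R :=
  gamma*H^2 + sumN c k * H - INR (k-1) * Rw.

Definition Hk (Rw gamma : R) (c : nat -> R) (k : nat) : R :=
  if Rlt_dec 0 gamma then (sqrt (sumN c k ^ 2 + 4 * INR (k-1) * Rw * gamma) - sumN c k) / (2 * gamma)
  else INR (k-1) * Rw / sumN c k.

Lemma Hk_spec Rw gamma c k : 0 < Rw -> 0 <= gamma -> (2 <= k)%nat -> 0 < sumN c k ->
  0 < Hk Rw gamma c k /\ Gk Rw gamma c k (Hk Rw gamma c k) = 0.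
Proof. intros HR Hg Hk2 HC.
 assert (HI: 0 < INR (k-1)) by (apply lt_0_INR; lia).
 unfold Hk, Gk. destruct (Rlt_dec 0 gamma) as [Hg0|Hg0].
 - set (C := sumN c k) in *. set (I := INR (k-1)) in *.
   assert (Hpos: 0 <= C^2 + 4*I*Rw*gamma).
   { assert (0 < I*Rw*gamma) by (apply Rmult_lt_0_compat; [apply Rmult_lt_0_compat|]; lra). nra. }
   pose proof (sqrt_sqrt _ Hpos) as Hs. pose proof (sqrt_pos (C^2 + 4*I*Rw*gamma)) as Hs0.
   set (s := sqrt (C^2 + 4*I*Rw*gamma)) in *.
   assert (0 < I*Rw*gamma) by (apply Rmult_lt_0_compat; [apply Rmult_lt_0_compat|]; lra).
   assert (Hsc: C < s) by nra.
   split. { apply Rdiv_lt_0_compat; lra. }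
   replace (gamma * ((s - C) / (2 * gamma)) ^ 2 + C * ((s - C) / (2 * gamma)) - I * Rw)
     with ((s*s - C^2 - 4*I*Rw*gamma)/(4*gamma)) by (field; lra).
   rewrite Hs. unfold Rdiv. ring.
 - assert (gamma = 0) by lra. subst gamma. split.
   + apply Rdiv_lt_0_compat; [apply Rmult_lt_0_compat|]; lra.
   + field. lra.
Qed.

Lemma Gk_lt Rw gamma c k a b : 0 <= gamma -> 0 < sumN c k -> 0 <= a -> a < b ->
  Gk Rw gamma c k a < Gk Rw gamma c k b.
Proof. intros. unfold Gk.
 assert (0 <= gamma*(b^2 - a^2)) by (apply Rmult_le_pos; nra).
 assert (0 < sumN c k * (b - a)) by nra. nra. Qed.

Lemma Gk_step Rw gamma c k H : (1 <= k)%nat ->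
  Gk Rw gamma c (S k) H = Gk Rw gamma c k H + c k * H - Rw.
Proof. intros. unfold Gk. simpl sumN. replace (S k - 1)%nat with k by lia.
 rewrite minus_INR by lia. change (INR 1) with 1. ring. Qed.

Lemma find_n (P : nat -> Prop) (Pdec : forall k, P k \/ ~ P k) N : (2 <= N)%nat -> P 2%nat ->
  exists n, (2 <= n)%nat /\ (n <= N)%nat /\ P n /\ (forall k, (n < k)%nat -> (k <= N)%nat -> ~ P k).
Proof. induction N; intros HN HP2; [lia|].
 destruct (Nat.eq_dec N 1) as [->|HN1].
 - exists 2%nat. repeat split; auto. intros; lia.
 - destruct IHN as [n [H1 [H2 [H3 H4]]]]; [lia|auto|].
   destruct (Pdec (S N)) as [HP|HP].
   + exists (S N). repeat split; auto; intros; lia.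
   + exists n. repeat split; auto; try lia. intros k Hk1 Hk2.
     destruct (Nat.eq_dec k (S N)) as [->|]; auto. apply H4; lia.
Qed.

Theorem proposition4p1 (N : nat) (Rw gamma : R) (c : nat -> R) :
  (2 <= N)%nat ->
  0 < Rw -> 0 <= gamma ->
  0 < c 0%nat ->
  (forall i j, (i <= j)%nat -> (j < N)%nat -> c i <= c j) ->
  exists h : nat -> R,
    is_equilibrium N Rw gamma c h /\
    (forall h' : nat -> R, is_equilibrium N Rw gamma c h' ->
        forall i, (i < N)%nat -> h' i = h i) /\
    exists n : nat, (2 <= n)%nat /\ (n <= N)%nat /\
      let H := sumN h N in
      let cn := sumN c n in
      (forall i, (i < n)%nat -> h i = H * (Rw - c i * H) / (Rw + gamma * H ^ 2)) /\
      (forall i, (n <= i)%nat -> (i < N)%nat -> h i = 0) /\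
      (0 < gamma -> H = (sqrt (cn ^ 2 + 4 * INR (n - 1) * Rw * gamma) - cn) / (2 * gamma)) /\
      (gamma = 0 -> H = INR (n - 1) * Rw / cn).
Proof.
 intros HN HR Hg Hc0 Hmono.
 assert (Hc: forall i, (i<N)%nat -> 0 < c i).
 { intros i Hi. assert (c 0%nat <= c i) by (apply Hmono; lia). lra. }
 assert (HCk: forall k, (1 <= k)%nat -> (k <= N)%nat -> 0 < sumN c k).
 { intros k Hk1 Hk2. apply sumN_pos; auto. intros; apply Hc; lia. }
 set (P := fun k => c (k-1)%nat * Hk Rw gamma c k < Rw).
 assert (HP2: P 2%nat).
 { unfold P. destruct (Hk_spec Rw gamma c 2 HR Hg ltac:(lia) (HCk 2%nat ltac:(lia) HN)) as [Hp HG].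
   unfold Gk in HG. simpl in HG. simpl.
   assert (0 < c 0%nat * Hk Rw gamma c 2) by nra.
   assert (0 <= gamma * Hk Rw gamma c 2 ^ 2) by (apply Rmult_le_pos; nra).
   nra. }
 destruct (find_n P (fun k => match Rlt_dec (c (k-1)%nat * Hk Rw gamma c k) Rw with
                               | left h => or_introl h | right h => or_intror h end) N HN HP2)
   as [n [Hn2 [HnN [HPn Hmax]]]].
 destruct (Hk_spec Rw gamma c n HR Hg Hn2 (HCk n ltac:(lia) HnN)) as [Hsp HGs].
 set (Hs := Hk Rw gamma c n) in *.
 assert (Hden: 0 < Rw + gamma * Hs^2) by nra.
 assert (HA: forall i, (i < n)%nat -> c i * Hs < Rw).
 { intros i Hi. unfold P in HPn. fold Hs in HPn.
   assert (c i <= c (n-1)%nat) by (apply Hmono; lia). nra. }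
 assert (HB: forall i, (n <= i)%nat -> (i < N)%nat -> Rw <= c i * Hs).
 { intros i Hi1 Hi2.
   assert (Hcn: c n <= c i) by (apply Hmono; lia).
   assert (Rw <= c n * Hs); [|nra].
   destruct (Rle_lt_dec Rw (c n * Hs)) as [|Hlt]; auto. exfalso.
   pose proof (Hmax (S n) ltac:(lia) ltac:(lia)) as HnP. unfold P in HnP.
   replace (S n - 1)%nat with n in HnP by lia.
   destruct (Hk_spec Rw gamma c (S n) HR Hg ltac:(lia) (HCk (S n) ltac:(lia) ltac:(lia))) as [Hsp' HG'].
   set (H' := Hk Rw gamma c (S n)) in *.
   assert (E1: Gk Rw gamma c (S n) Hs < 0) by (rewrite Gk_step by lia; lra).
   assert (Hlt2: Hs < H').
   { destruct (Rlt_le_dec Hs H') as [|Hle]; auto. exfalso.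
     destruct Hle as [Hle|Heq].
     - pose proof (Gk_lt Rw gamma c (S n) H' Hs Hg (HCk (S n) ltac:(lia) ltac:(lia)) ltac:(lra) Hle). lra.
     - rewrite Heq in HG'. lra. }
   pose proof (Gk_lt Rw gamma c n Hs H' Hg (HCk n ltac:(lia) HnN) ltac:(lra) Hlt2).
   rewrite Gk_step in HG' by lia. lra. }
 assert (Hsum1: sumN (tt Rw gamma c Hs) N = 1).
 { rewrite (sumN_zero_tail _ n N) by (auto; intros i Hi1 Hi2; unfold tt; apply Rmax_left;
      pose proof (HB i Hi1 Hi2);
      assert (0 <= (c i * Hs - Rw)/(Rw+gamma*Hs^2))
        by (apply Rmult_le_pos; [lra| left; apply Rinv_0_lt_compat; lra]);
      assert ((Rw - c i*Hs)/(Rw+gamma*Hs^2) = -((c i*Hs - Rw)/(Rw+gamma*Hs^2))) by (field; lra);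
      lra).
   rewrite (sumN_ext _ (fun i => (Rw - c i * Hs) / (Rw + gamma * Hs^2))).
   2:{ intros i Hi. unfold tt. apply Rmax_right. apply Rlt_le, Rdiv_lt_0_compat; [|lra].
       pose proof (HA i Hi). lra. }
   rewrite sumN_lin. unfold Gk in HGs. rewrite minus_INR in HGs by lia.
   change (INR 1) with 1 in HGs.
   apply (Rmult_eq_reg_r (Rw + gamma*Hs^2)); [|lra].
   field_simplify; [|lra]. lra. }
 set (h := fun i => Hs * tt Rw gamma c Hs i).
 assert (Hsum: sumN h N = Hs) by (unfold h; rewrite sumN_scal, Hsum1; ring).
 exists h. split; [|split].
 - apply eq_suff; auto. rewrite Hsum; lra. intros i Hi. rewrite Hsum. reflexivity.
 - intros h' Heq' i Hi.
   pose proof (eq_nec N Rw gamma c h' Hc HR Hg Heq') as Hn.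
   set (T := sumN h' N) in *.
   destruct (Hn i Hi) as [HS' _].
   assert (0 <= h' i) by (apply (proj1 Heq'); auto).
   assert (HT: 0 < T) by lra.
   assert (HsT: sumN (tt Rw gamma c T) N = 1).
   { assert (T = T * sumN (tt Rw gamma c T) N).
     { rewrite <- sumN_scal. unfold T at 1. apply sumN_ext. intros j Hj. apply Hn; auto. }
     apply (Rmult_eq_reg_l T); [|lra]. lra. }
   assert (HTs: T = Hs) by (apply (psi_unique N Rw gamma c); auto).
   rewrite (proj2 (Hn i Hi)). fold T. rewrite HTs. reflexivity.
 - exists n. split; [auto|split; [auto|]]. cbv zeta. rewrite Hsum.
   split; [|split; [|split]].
   + intros i Hi. unfold h, tt. rewrite Rmax_right. unfold Rdiv; ring.
     apply Rlt_le, Rdiv_lt_0_compat; [|lra]. pose proof (HA i Hi). lra.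
   + intros i Hi1 Hi2. unfold h, tt. rewrite Rmax_left. ring.
     pose proof (HB i Hi1 Hi2).
     assert (0 <= (c i * Hs - Rw)/(Rw+gamma*Hs^2))
        by (apply Rmult_le_pos; [lra| left; apply Rinv_0_lt_compat; lra]).
     assert ((Rw - c i*Hs)/(Rw+gamma*Hs^2) = -((c i*Hs - Rw)/(Rw+gamma*Hs^2))) by (field; lra).
     lra.
   + intros Hg0. unfold Hs, Hk. destruct (Rlt_dec 0 gamma); [reflexivity|lra].
   + intros Hg0. unfold Hs, Hk. destruct (Rlt_dec 0 gamma); [lra|reflexivity].
Qed.
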